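(* Let $n\geq 3$ and let $A$ and $B$ be two $n\times n$ generalized tournament matrices with the same principal minors of orders at most $4$. Suppose that $A$ is separable. If there is no $\alpha>1/2$ such that $A$ and $B$ are both $\alpha$-linear, then $A$ and $B$ have a common nontrivial clan.
   Context: A generalized tournament matrix of order $n$ is a real $n\times n$ matrix $M=(m_{ij})$ with nonnegative entries satisfying $M+M^{t}=J_n-I_n$. Write $[n]=\{1,\ldots,n\}$. A clan of $M$ is a subset $X\subseteq[n]$ such that for all $i,j\in X$ and $k\in[n]\setminus X$, $m_{ik}=m_{jk}$ and $m_{ki}=m_{kj}$; the empty set, singletons and $[n]$ are trivial clans. $M$ is separable if $[n]$ can be partitioned into two nonempty clans. For $\alpha>1/2$, $M$ is $\alpha$-linear if there is an ordering $x_1,\ldots,x_n$ of $[n]$ with $m_{x_ix_j}=\alpha$ whenever $i<j$. *)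

(* Defs.v *)
From HB Require Import structures.
From mathcomp Require Import all_boot all_order all_algebra all_fingroup.
Set Implicit Arguments. Unset Strict Implicit. Unset Printing Implicit Defensive.
Import Order.TTheory GRing.Theory Num.Theory.
Local Open Scope ring_scope.

Definition gen_tournament (R : realFieldType) (n : nat) (M : 'M[R]_n) : Prop :=
  (forall i j, 0 <= M i j) /\ M + M^T = const_mx 1 - 1%:M.

(* Principal submatrix indexed by S, rows/columns in increasing order of index. *)
Definition principal_submx (R : ringType) (n : nat) (M : 'M[R]_n)
  (S : {set 'I_n}) : 'M[R]_#|S| :=
  \matrix_(i < #|S|, j < #|S|) M (enum_val i) (enum_val j).

Definition principal_minor (R : comRingType) (n : nat) (M : 'M[R]_n)
  (S : {set 'I_n}) : R := \det (principal_submx M S).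

Definition clan (R : ringType) (n : nat) (M : 'M[R]_n) (X : {set 'I_n}) : Prop :=
  forall i j k, i \in X -> j \in X -> k \notin X ->
    M i k = M j k /\ M k i = M k j.

Definition nontrivial_set (n : nat) (X : {set 'I_n}) : Prop :=
  (1 < #|X|)%N /\ X != setT.

Definition separable (R : ringType) (n : nat) (M : 'M[R]_n) : Prop :=
  exists X : {set 'I_n}, [/\ X != set0, ~: X != set0, clan M X & clan M (~: X)].

(* alpha-linear: some ordering x_1..x_n (a permutation s) with m_{x_i x_j} = alpha for i < j. *)
Definition alpha_linear (R : ringType) (n : nat) (M : 'M[R]_n) (alpha : R) : Prop :=
  exists s : 'S_n, forall i j : 'I_n, (i < j)%N -> M (s i) (s j) = alpha.

(* Main.v *)
Require Import Defs.
From HB Require Import structures.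
From mathcomp Require Import all_boot all_order all_algebra all_fingroup.
From mathcomp Require Import zify ring lra.
Set Implicit Arguments. Unset Strict Implicit. Unset Printing Implicit Defensive.
Import Order.TTheory GRing.Theory Num.Theory.
Local Open Scope ring_scope.

Definition Dm (R : ringType) n (M : 'M[R]_n) a b d :=
  M a b * M b d * M d a + M a d * M d b * M b a.

Lemma det2 (R : comRingType) (A : 'M[R]_2) : \det A = A 0 0 * A 1 1 - A 0 1 * A 1 0.
Proof.
rewrite (expand_det_row _ 0) !big_ord_recr big_ord0 /= add0r /cofactor !det_mx11 !mxE /=.
pose B := fun p q : nat => A (inord p) (inord q).
have E : forall i j : 'I_2, A i j = B i j by move=> i j; rewrite /B !inord_val.
rewrite !E /= /bump /=; ring.
Qed.

Lemma det3 (R : comRingType) (A : 'M[R]_3) : \det A =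
  A 0 0 * A 1 1 * A 2 2 - A 0 0 * A 1 2 * A 2 1 - A 0 1 * A 1 0 * A 2 2
  + A 0 1 * A 1 2 * A 2 0 + A 0 2 * A 1 0 * A 2 1 - A 0 2 * A 1 1 * A 2 0.
Proof.
rewrite (expand_det_row _ 0) !big_ord_recr big_ord0 /= add0r /cofactor !det2 !mxE /=.
pose B := fun p q : nat => A (inord p) (inord q).
have E : forall i j : 'I_3, A i j = B i j by move=> i j; rewrite /B !inord_val.
rewrite !E /= /bump /=; ring.
Qed.

Lemma det_k2 (R : comRingType) k (A : 'M[R]_k) : k = 2%N -> (forall i, A i i = 0) ->
  exists i0 i1 : 'I_k, i0 != i1 /\ \det A = - (A i0 i1 * A i1 i0).
Proof.
move=> ek; subst k => d0; exists 0, 1; split => //.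
rewrite det2 !d0; ring.
Qed.

Lemma det_k3 (R : comRingType) k (A : 'M[R]_k) : k = 3%N -> (forall i, A i i = 0) ->
  exists i0 i1 i2 : 'I_k, [/\ i0 != i1, i0 != i2, i1 != i2 & \det A = Dm A i0 i1 i2].
Proof.
move=> ek; subst k => d0; exists 0, 1, 2; split => //.
rewrite det3 !d0 /Dm; ring.
Qed.

Lemma sym2 (R : comRingType) n (M : 'M[R]_n) u v e0 e1 : e0 != e1 ->
  e0 \in [set u; v] -> e1 \in [set u; v] -> M e0 e1 * M e1 e0 = M u v * M v u.
Proof.
move=> n01 i0 i1; move: i0 i1 n01; rewrite !inE.
by move=> /orP[]/eqP-> /orP[]/eqP->; rewrite ?eqxx // => _; rewrite mulrC.
Qed.

Lemma sym3 (R : comRingType) n (M : 'M[R]_n) a b d e0 e1 e2 :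
  e0 != e1 -> e0 != e2 -> e1 != e2 ->
  e0 \in [set a; b; d] -> e1 \in [set a; b; d] -> e2 \in [set a; b; d] ->
  Dm M e0 e1 e2 = Dm M a b d.
Proof.
move=> n01 n02 n12 i0 i1 i2; move: i0 i1 i2 n01 n02 n12; rewrite !inE.
move=> /orP[/orP[]|]/eqP-> /orP[/orP[]|]/eqP-> /orP[/orP[]|]/eqP->;
  rewrite ?eqxx // => *; rewrite /Dm; ring.
Qed.

Lemma pm2 (R : comRingType) n (M : 'M[R]_n) u v : (forall i, M i i = 0) -> u != v ->
  principal_minor M [set u; v] = - (M u v * M v u).
Proof.
move=> d0 uv; rewrite /principal_minor.
have c2 : #|[set u; v]| = 2%N by rewrite cards2 uv.
have dz : forall i, principal_submx M [set u; v] i i = 0 by move=> i; rewrite mxE d0.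
have [i0 [i1 [n01 ->]]] := det_k2 c2 dz.
rewrite !mxE; congr (- _); apply: sym2; rewrite ?enum_valP //.
by apply: contra n01 => /eqP/enum_val_inj ->.
Qed.

Lemma pm3 (R : comRingType) n (M : 'M[R]_n) a b d : (forall i, M i i = 0) ->
  a != b -> a != d -> b != d -> principal_minor M [set a; b; d] = Dm M a b d.
Proof.
move=> d0 ab ad bd; rewrite /principal_minor.
have c3 : #|[set a; b; d]| = 3%N.
  by rewrite -setUA cardsU1 cards2 bd !inE negb_or ab ad.
have dz : forall i, principal_submx M [set a; b; d] i i = 0 by move=> i; rewrite mxE d0.
have [i0 [i1 [i2 [n01 n02 n12 ->]]]] := det_k3 c3 dz.
rewrite /Dm !mxE -/(Dm M _ _ _); apply: sym3; rewrite ?enum_valP //.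
- by apply: contra n01 => /eqP/enum_val_inj ->.
- by apply: contra n02 => /eqP/enum_val_inj ->.
- by apply: contra n12 => /eqP/enum_val_inj ->.
Qed.





Definition tour (R : ringType) n (M : 'M[R]_n) :=
  (forall i, M i i = 0) /\ (forall i j, i != j -> M i j + M j i = 1).

Lemma gt_tour (R : realFieldType) n (M : 'M[R]_n) : gen_tournament M -> tour M.
Proof.
case=> _ E; split.
- move=> i; have := congr1 (fun X : 'M[R]_n => X i i) E; rewrite !mxE eqxx /=. lra.
- move=> i j ij; have := congr1 (fun X : 'M[R]_n => X i j) E; rewrite !mxE (negbTE ij) /=. lra.
Qed.

Definition good (R : ringType) n (M N : 'M[R]_n) :=
  [/\ tour M, tour N,
   (forall u v, u != v -> N u v * N v u = M u v * M v u) &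
   (forall a b d, a != b -> a != d -> b != d -> Dm N a b d = Dm M a b d)].

Lemma good_sym (R : ringType) n (M N : 'M[R]_n) : good M N -> good N M.
Proof.
case=> tM tN H2 H3; split => // [u v uv|a b d ab ad bd]; by rewrite ?H2 ?H3.
Qed.

Definition chain (R : ringType) n (M : 'M[R]_n) (c : R) (r : 'I_n -> nat) :=
  forall u v, (r u < r v)%N -> M u v = c.

Lemma tour1 (R : ringType) n (M : 'M[R]_n) u v : tour M -> u != v -> M v u = 1 - M u v.
Proof. by case=> _ h uv; rewrite -(h _ _ uv) addrC addKr. Qed.

Lemma Mlt (R : ringType) n (M : 'M[R]_n) c r u v : chain M c r -> (r u < r v)%N -> M u v = c.
Proof. by move=> Ch h; apply: Ch. Qed.

Lemma Mgt (R : ringType) n (M : 'M[R]_n) c r u v : tour M -> chain M c r -> (r u < r v)%N -> M v u = 1 - c.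
Proof.
move=> T Ch h; have uv : u != v by apply/eqP=> e; move: h; rewrite e ltnn.
by rewrite (tour1 T uv) (Ch _ _ h).
Qed.

Lemma D2 (R : realFieldType) n (M : 'M[R]_n) c r a b d : tour M -> chain M c r ->
  a != b -> r a = r b -> r d <> r a -> Dm M a b d = c * (1 - c).
Proof.
move=> T Ch ab eab nd; rewrite /Dm (tour1 T ab).
case: (ltngtP (r a) (r d)) => h.
- have h' : (r b < r d)%N by rewrite -eab.
  rewrite (Mlt Ch h) (Mgt T Ch h) (Mlt Ch h') (Mgt T Ch h'); ring.
- have h' : (r d < r b)%N by rewrite -eab.
  rewrite (Mlt Ch h) (Mgt T Ch h) (Mlt Ch h') (Mgt T Ch h'); ring.
- by move: nd; rewrite h.
Qed.

Lemma DM (R : realFieldType) n (M : 'M[R]_n) c r a b d : tour M -> chain M c r ->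
  a != b -> a != d -> b != d -> ~ (r a = r b /\ r b = r d) -> Dm M a b d = c * (1 - c).
Proof.
move=> T Ch ab ad bd nall.
case: (eqVneq (r a) (r b)) => [e1|n1].
  by apply: (D2 T Ch ab e1) => e2; apply: nall; split; lia.
case: (eqVneq (r a) (r d)) => [e2|n2].
  rewrite -(@D2 _ _ M c r a d b T Ch ad e2); last by move=> e; move/eqP: n1; rewrite e.
  by rewrite /Dm; ring.
case: (eqVneq (r b) (r d)) => [e3|n3].
  rewrite -(@D2 _ _ M c r b d a T Ch bd e3); last by move=> e; move/eqP: n1; rewrite e.
  by rewrite /Dm; ring.
rewrite /Dm.
case: (ltngtP (r a) (r b)) => h1; case: (ltngtP (r b) (r d)) => h2;
 case: (ltngtP (r a) (r d)) => h3; try lia;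
 rewrite (Mlt Ch h1) (Mgt T Ch h1) (Mlt Ch h2) (Mgt T Ch h2) (Mlt Ch h3) (Mgt T Ch h3); ring.
Qed.

Lemma K (R : realFieldType) n (M N : 'M[R]_n) c r a b d : good M N -> chain M c r -> c != 1 - c ->
  a != b -> a != d -> b != d -> N a b = c -> N b d = c -> ~ (r a = r b /\ r b = r d) -> N a d = c.
Proof.
case=> TM TN _ H3 Ch hc ab ad bd e1 e2 nall.
have E := H3 _ _ _ ab ad bd; rewrite (DM TM Ch ab ad bd nall) /Dm in E.
rewrite (tour1 TN ad) (tour1 TN bd) (tour1 TN ab) e1 e2 in E.
set q := N a d in E *.
have H : (q - c) * ((1 - c) - c) = (c * c * (1 - q) + q * (1 - c) * (1 - c)) - c * (1 - c) by ring.
rewrite E subrr in H; move/eqP: H; rewrite mulf_eq0 !subr_eq0 [1 - c == c]eq_sym (negbTE hc) orbF.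
by move/eqP.
Qed.

Lemma F0 (R : realFieldType) n (M N : 'M[R]_n) c r u v : good M N -> chain M c r ->
  r u <> r v -> N u v = c \/ N u v = 1 - c.
Proof.
case=> TM TN H2 _ Ch nuv.
have uv : u != v by apply/eqP=> e; apply: nuv; rewrite e.
have E := H2 _ _ uv; rewrite (tour1 TN uv) in E.
have Mc : M u v * M v u = c * (1 - c).
  case: (ltngtP (r u) (r v)) => h.
  - by rewrite (Mlt Ch h) (Mgt TM Ch h).
  - rewrite (Mlt Ch h) (Mgt TM Ch h); ring.
  - by [].
rewrite Mc in E.
have H : (N u v - c) * (N u v - (1 - c)) = 0.
  have -> : (N u v - c) * (N u v - (1 - c)) = c * (1 - c) - N u v * (1 - N u v) by ring.
  by rewrite E subrr.
move/eqP: H; rewrite mulf_eq0 !subr_eq0 => /orP[]/eqP; by [left|right].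
Qed.



Definition ltN (R : ringType) n (N : 'M[R]_n) (c : R) (r : 'I_n -> nat) u v : bool :=
  [&& u != v, N u v == c &
   (r u != r v) || [exists z, [&& r z != r u, N u z == c & N z v == c]]].

Lemma neq_of_r n (r : 'I_n -> nat) u v : r u <> r v -> u != v.
Proof. by move=> h; apply/eqP=> e; apply: h; rewrite e. Qed.

Lemma ltN_asym (R : realFieldType) n (M N : 'M[R]_n) c r u v : good M N -> c != 1 - c ->
  ltN N c r u v -> ~~ ltN N c r v u.
Proof.
case=> _ TN _ _ hc /and3P[uv /eqP Nuv _]; apply/negP => /and3P[_ /eqP Nvu _].
by move/eqP: hc; apply; rewrite -{1}Nvu (tour1 TN uv) Nuv.
Qed.

Lemma ltN_tot (R : realFieldType) n (M N : 'M[R]_n) c r u v : good M N -> chain M c r ->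
  r u <> r v -> ltN N c r u v || ltN N c r v u.
Proof.
move=> G Ch ruv; have uv := neq_of_r ruv.
case: G => TM TN H2 H3.
case: (F0 (And4 TM TN H2 H3) Ch ruv) => e.
- by apply/orP; left; rewrite /ltN uv e eqxx /=; apply/orP; left; apply/eqP.
- apply/orP; right; rewrite /ltN eq_sym uv (tour1 TN uv) e /=.
  rewrite (_ : 1 - (1 - c) = c); last by ring.
  by rewrite eqxx /=; apply/orP; left; apply/eqP=> h; apply: ruv.
Qed.

Lemma ltN_trans (R : realFieldType) n (M N : 'M[R]_n) c r a b d : good M N -> chain M c r ->
  c != 1 - c -> ltN N c r a b -> ltN N c r b d -> ltN N c r a d.
Proof.
move=> G Ch hc Hab Hbd.
have ad : a != d.
  apply/eqP=> e; move: Hbd; rewrite -e => Hba.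
  by move: (ltN_asym G hc Hab); rewrite Hba.
have TN : tour N by case: G.
move: Hab => /and3P[ab /eqP Nab Hab']; move: Hbd => /and3P[bd /eqP Nbd Hbd'].
case: (boolP [&& r a == r b & r b == r d]) => [/andP[/eqP e1 /eqP e2] | nall].
- move: Hab'; rewrite e1 eqxx /= => /existsP[z /and3P[rz /eqP Naz /eqP Nzb]].
  have rzd : r z <> r d by move=> h; move: rz; rewrite h e2 eqxx.
  have rza : r z <> r a by move=> h; move: rz; rewrite h e1 eqxx.
  have zd := neq_of_r rzd.
  have az : a != z by rewrite eq_sym; exact: neq_of_r rza.
  case: (F0 G Ch rzd) => Nzd.
  + have Nad : N a d = c.
      apply: (K G Ch hc az ad zd Naz Nzd) => -[h _]; by apply: rza.
    rewrite /ltN ad Nad eqxx /=; apply/orP; right; apply/existsP; exists z.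
    by rewrite Naz Nzd eqxx /= andbT e1.
  + have Ndz : N d z = c by rewrite (tour1 TN zd) Nzd; ring.
    have bz : b != z by apply: (@neq_of_r _ r) => h; apply: rza; rewrite -h e1.
    have dz : d != z by rewrite eq_sym.
    have Nbz : N b z = c.
      apply: (K G Ch hc bd bz dz Nbd Ndz) => -[_ h]; apply: rzd; by rewrite h.
    have zb : z != b by rewrite eq_sym.
    by exfalso; move/eqP: hc; apply; rewrite -{1}Nbz (tour1 TN zb) Nzb.
- have Nad : N a d = c.
    apply: (K G Ch hc ab ad bd Nab Nbd) => -[h1 h2]; move: nall; by rewrite h1 h2 !eqxx.
  rewrite /ltN ad Nad eqxx /=; case: (eqVneq (r a) (r d)) => [e|] //=.
  apply/existsP; exists b; rewrite Nab Nbd !eqxx !andbT.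
  by apply/negP => /eqP h; move: nall; rewrite h -e !eqxx.
Qed.



Lemma neqC (T : eqType) (x y : T) : x != y -> y != x.
Proof. by rewrite eq_sym. Qed.

Lemma ltN_eqpart (R : realFieldType) n (M N : 'M[R]_n) c r u v : good M N -> chain M c r ->
  ~~ ltN N c r u v -> ~~ ltN N c r v u -> r u = r v.
Proof.
move=> G Ch h1 h2; case: (eqVneq (r u) (r v)) => // /eqP ne.
by move: (ltN_tot G Ch ne); rewrite (negbTE h1) (negbTE h2).
Qed.

Lemma ltN_unsplit (R : realFieldType) n (M N : 'M[R]_n) c r u v z : good M N -> chain M c r ->
  c != 1 - c -> ~~ ltN N c r u v -> ~~ ltN N c r v u -> r z <> r u -> N z u = N z v.
Proof.
move=> G Ch hc h1 h2 rz.
case: (eqVneq u v) => [-> //|uv].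
have ruv := ltN_eqpart G Ch h1 h2.
have rzv : r z <> r v by rewrite -ruv.
have TN : tour N by case: G.
have zu := neq_of_r rz; have zv := neq_of_r rzv.
have uz : u != z by rewrite eq_sym. have vz : v != z by rewrite eq_sym.
case: (F0 G Ch rz) => e1; case: (F0 G Ch rzv) => e2; rewrite ?e1 ?e2 //.
- have Nvz : N v z = c by rewrite (tour1 TN zv) e2; ring.
  have Nvu : N v u = c.
    apply: (K G Ch hc vz (neqC uv) (neqC uz) Nvz e1) => -[h _]; apply: rzv; by rewrite h.
  exfalso; move/negP: h2; apply; rewrite /ltN eq_sym uv Nvu eqxx /=.
  apply/orP; right; apply/existsP; exists z; rewrite Nvz e1 eqxx andbT andbT.
  by apply/eqP => h; apply: rzv.
- have Nuz : N u z = c by rewrite (tour1 TN zu) e1; ring.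
  have Nuv : N u v = c.
    apply: (K G Ch hc uz uv (neqC vz) Nuz e2) => -[h _]; apply: rz; by rewrite h.
  exfalso; move/negP: h1; apply; rewrite /ltN uv Nuv eqxx /=.
  apply/orP; right; apply/existsP; exists z; rewrite Nuz e2 eqxx andbT andbT.
  by apply/eqP => h; apply: rz.
Qed.

Lemma ltN_compat (R : realFieldType) n (M N : 'M[R]_n) c r z u v : good M N -> chain M c r ->
  c != 1 - c -> ltN N c r z u -> ~~ ltN N c r u v -> ~~ ltN N c r v u -> ltN N c r z v.
Proof.
move=> G Ch hc Hzu h1 h2.
have zv : z != v by apply/eqP=> e; move: h2; rewrite -e Hzu.
have ruv := ltN_eqpart G Ch h1 h2.
move: Hzu => /and3P[zu /eqP Nzu H].
case: (eqVneq (r z) (r u)) => [ezu | nzu].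
- move: H; rewrite ezu eqxx /= => /existsP[w /and3P[rw /eqP Nzw /eqP Nwu]].
  have rwu : r w <> r u by move=> h; move: rw; rewrite h eqxx.
  have Nwv : N w v = c by rewrite -(ltN_unsplit G Ch hc h1 h2 rwu).
  have rwv : r w <> r v by rewrite -ruv.
  have zw : z != w by rewrite eq_sym; apply: (@neq_of_r _ r) => h; apply: rwu; rewrite h ezu.
  have Nzv : N z v = c.
    apply: (K G Ch hc zw zv (neq_of_r rwv) Nzw Nwv) => -[h _]; apply: rwu; by rewrite -h ezu.
  rewrite /ltN zv Nzv eqxx /=; apply/orP; right; apply/existsP; exists w.
  by rewrite Nzw Nwv eqxx !andbT ezu.
- have rzu : r z <> r u by apply/eqP.
  have Nzv : N z v = c by rewrite -(ltN_unsplit G Ch hc h1 h2 rzu).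
  by rewrite /ltN zv Nzv eqxx /= -ruv nzu.
Qed.

Definition rk (R : ringType) n (N : 'M[R]_n) c r u := #|[set w | ltN N c r w u]|.

Lemma rk_lt (R : realFieldType) n (M N : 'M[R]_n) c r u v : good M N -> chain M c r ->
  c != 1 - c -> ltN N c r u v -> (rk N c r u < rk N c r v)%N.
Proof.
move=> G Ch hc H; apply: proper_card; apply/properP; split.
- by apply/subsetP => w; rewrite !inE => h; exact: ltN_trans G Ch hc h H.
- by exists u; rewrite !inE // /ltN eqxx.
Qed.

Lemma rk_eq (R : realFieldType) n (M N : 'M[R]_n) c r u v : good M N -> chain M c r ->
  c != 1 - c -> ~~ ltN N c r u v -> ~~ ltN N c r v u -> rk N c r u = rk N c r v.
Proof.
move=> G Ch hc h1 h2; apply: eq_card => w; rewrite !inE.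
by apply/idP/idP => h; [exact: ltN_compat G Ch hc h h1 h2 | exact: ltN_compat G Ch hc h h2 h1].
Qed.

Lemma refine (R : realFieldType) n (M N : 'M[R]_n) c r : good M N -> chain M c r ->
  c != 1 - c -> chain N c (rk N c r) /\ (forall u v, rk N c r u = rk N c r v -> r u = r v).
Proof.
move=> G Ch hc; split.
- move=> u v h.
  case: (boolP (ltN N c r u v)) => [/and3P[_ /eqP -> _] // | h1].
  case: (boolP (ltN N c r v u)) => [h2 | h2].
    by move: (rk_lt G Ch hc h2); lia.
  by move: (rk_eq G Ch hc h1 h2); lia.
- move=> u v e.
  case: (boolP (ltN N c r u v)) => [h1 | h1].
    by move: (rk_lt G Ch hc h1); lia.
  case: (boolP (ltN N c r v u)) => [h2 | h2].
    by move: (rk_lt G Ch hc h2); lia.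
  exact: ltN_eqpart G Ch h1 h2.
Qed.

Definition concl (R : realFieldType) n (M N : 'M[R]_n) : Prop :=
  (exists X : {set 'I_n}, [/\ nontrivial_set X, clan M X & clan N X]) \/
  (exists alpha : R, 1 / 2 < alpha /\ alpha_linear M alpha /\ alpha_linear N alpha).

Lemma concl_sym (R : realFieldType) n (M N : 'M[R]_n) : concl M N -> concl N M.
Proof.
case=> [[X [a b d]]|[al [h [l1 l2]]]]; [left; exists X | right; exists al] => //.
Qed.

Lemma clan_chain (R : ringType) n (M : 'M[R]_n) c r i j k : tour M -> chain M c r ->
  r i = r j -> r k <> r i -> M i k = M j k /\ M k i = M k j.
Proof.
move=> T Ch eij nk; case: (ltngtP (r i) (r k)) => h.
- have h' : (r j < r k)%N by rewrite -eij.
  by rewrite (Mlt Ch h) (Mlt Ch h') (Mgt T Ch h) (Mgt T Ch h').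
- have h' : (r k < r j)%N by rewrite -eij.
  by rewrite (Mlt Ch h) (Mlt Ch h') (Mgt T Ch h) (Mgt T Ch h').
- by exfalso; apply: nk.
Qed.

Lemma final (R : realFieldType) n (M N : 'M[R]_n) c r r' u0 v0 : tour M -> tour N ->
  chain M c r -> chain N c r' -> (forall u v, r u = r v <-> r' u = r' v) -> r u0 <> r v0 ->
  (exists X, [/\ nontrivial_set X, clan M X & clan N X]) \/ injective r.
Proof.
move=> TM TN ChM ChN iff ne.
case: (boolP [exists u, exists v, (u != v) && (r u == r v)]) =>
   [/existsP[u /existsP[v /andP[uv /eqP ruv]]] | H].
- left; exists [set w | r w == r u]; split.
  + split.
    * by apply/card_gt1P; exists u, v; rewrite !inE eqxx ruv eqxx uv.
    * apply/eqP => EZ.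
      have h0 : u0 \in [set w | r w == r u] by rewrite EZ inE.
      have h1 : v0 \in [set w | r w == r u] by rewrite EZ inE.
      by move: h0 h1; rewrite !inE => /eqP a /eqP b; apply: ne; rewrite a b.
  + move=> i j k; rewrite !inE => /eqP ri /eqP rj rk; apply: (clan_chain TM ChM).
    * by rewrite ri rj.
    * by move=> h; move: rk; rewrite h ri eqxx.
  + move=> i j k; rewrite !inE => /eqP ri /eqP rj rk; apply: (clan_chain TN ChN).
    * by apply/iff; rewrite ri rj.
    * by move=> /iff h; move: rk; rewrite h ri eqxx.
- right => u v e; case: (eqVneq u v) => // uv; exfalso; move/negP: H; apply.
  by apply/existsP; exists u; apply/existsP; exists v; rewrite uv e eqxx.
Qed.

Lemma pos_lt n (g : 'I_n -> nat) u : (#|[set w | (g w < g u)%N]| < n)%N.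
Proof.
have := @proper_card _ [set w | (g w < g u)%N] [set: 'I_n].
rewrite cardsT card_ord; apply; rewrite properT; apply/eqP => E.
have : u \in [set w | (g w < g u)%N] by rewrite E inE.
by rewrite inE ltnn.
Qed.

Definition posf n (g : 'I_n -> nat) (u : 'I_n) : 'I_n := Ordinal (pos_lt g u).

Lemma rank_linear (R : ringType) n (M : 'M[R]_n) (al : R) (g : 'I_n -> nat) :
  injective g -> (forall u v, (g u < g v)%N -> M u v = al) -> alpha_linear M al.
Proof.
move=> gi H.
have mono : forall u v, (g u < g v)%N -> (posf g u < posf g v)%N.
  move=> u v h /=; apply: proper_card; apply/properP; split.
  - by apply/subsetP => w; rewrite !inE => hw; exact: ltn_trans hw h.
  - by exists u; rewrite !inE ?h ?ltnn.
have fi : injective (posf g).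
  move=> u v e; case: (ltngtP (g u) (g v)) => h.
  - by move: (mono _ _ h); rewrite e ltnn.
  - by move: (mono _ _ h); rewrite e ltnn.
  - exact: gi.
exists (perm fi)^-1%g => i j ij; apply: H.
set u := (perm fi)^-1%g i; set v := (perm fi)^-1%g j.
have eu : posf g u = i by rewrite -(permE fi) /u permKV.
have ev : posf g v = j by rewrite -(permE fi) /v permKV.
case: (ltngtP (g u) (g v)) => h //.
- by move: (mono _ _ h); rewrite eu ev => ji; move: ij; rewrite ltnNge (ltnW ji).
- by move: ij; rewrite -eu -ev (gi _ _ h) ltnn.
Qed.

Lemma rank_linear_rev (R : ringType) n (M : 'M[R]_n) c (g : 'I_n -> nat) :
  tour M -> injective g -> chain M c g -> alpha_linear M (1 - c).
Proof.
move=> T gi Ch; set K := (\max_w g w)%N.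
have bd : forall u, (g u <= K)%N by move=> u; apply: leq_bigmax.
apply: (@rank_linear _ _ _ _ (fun u => K - g u)%N).
- move=> u v e; apply: gi; have := bd u; have := bd v; lia.
- move=> u v h; have h' : (g v < g u)%N by have := bd u; have := bd v; lia.
  have vu : v != u by apply/eqP => e; move: h'; rewrite e ltnn.
  by rewrite (tour1 T vu) (Ch _ _ h').
Qed.

Definition cnt n (r : 'I_n -> nat) := #|[set p : 'I_n * 'I_n | r p.1 != r p.2]|.

Lemma cnt_le n (r : 'I_n -> nat) : (cnt r <= n * n)%N.
Proof. by rewrite /cnt; apply: leq_trans (max_card _) _; rewrite card_prod card_ord. Qed.

Lemma final_step (R : realFieldType) n (M N : 'M[R]_n) c r u0 v0 : good M N -> chain M c r ->
  c != 1 - c -> r u0 <> r v0 -> (cnt (rk N c r) <= cnt r)%N -> concl M N.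
Proof.
move=> G Ch hc ne hle; have [ChN ref] := refine G Ch hc.
set r' := rk N c r in ChN ref hle *.
have sub : [set p | r p.1 != r p.2] \subset [set p | r' p.1 != r' p.2].
  by apply/subsetP => p; rewrite !inE; apply: contra => /eqP e; apply/eqP; exact: ref.
have eqS : [set p | r p.1 != r p.2] = [set p | r' p.1 != r' p.2].
  by apply/eqP; rewrite eqEcard sub.
have iff : forall u v, r u = r v <-> r' u = r' v.
  move=> u v; split; last exact: ref.
  move=> e; case: (eqVneq (r' u) (r' v)) => // ne'; exfalso.
  have : (u, v) \in [set p | r' p.1 != r' p.2] by rewrite inE /= ne'.
  by rewrite -eqS inE /= e eqxx.
have TM : tour M by case: G.
have TN : tour N by case: G.
case: (final TM TN Ch ChN iff ne) => [[X [nt cM cN]] | ri]; first by left; exists X.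
right; have ri' : injective r' by move=> u v e; apply: ri; exact: ref.
case: (ltrgtP c (1/2)) => hc2.
- exists (1 - c); split; first lra.
  by split; [exact: rank_linear_rev TM ri Ch | exact: rank_linear_rev TN ri' ChN].
- by exists c; split => //; split; [exact: rank_linear ri Ch | exact: rank_linear ri' ChN].
- by exfalso; move/eqP: hc; apply; lra.
Qed.

Lemma ind (R : realFieldType) n c k : forall (M N : 'M[R]_n) r u0 v0, good M N -> chain M c r ->
  c != 1 - c -> r u0 <> r v0 -> (n * n - cnt r <= k)%N -> concl M N.
Proof.
elim: k => [|k IH] M N r u0 v0 G Ch hc ne hk;
  (case: (leqP (cnt (rk N c r)) (cnt r)) => hle; first exact: final_step G Ch hc ne hle).
- by have := cnt_le (rk N c r); lia.
- have [ChN ref] := refine G Ch hc; apply: concl_sym.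
  apply: (IH N M (rk N c r) u0 v0 (good_sym G) ChN hc).
  + by move=> e; apply: ne; exact: ref.
  + by have := cnt_le (rk N c r); lia.
Qed.

Theorem proposition5p8 (R : realFieldType) (n : nat) (A B : 'M[R]_n) :
  (3 <= n)%N ->
  gen_tournament A -> gen_tournament B ->
  (forall S : {set 'I_n}, (#|S| <= 4)%N -> principal_minor A S = principal_minor B S) ->
  separable A ->
  ~ (exists alpha : R, 1 / 2 < alpha /\ alpha_linear A alpha /\ alpha_linear B alpha) ->
  exists X : {set 'I_n}, [/\ nontrivial_set X, clan A X & clan B X].
Proof.
move=> n3 HA HB H4 [X [X0 CX0 cX cCX]] nlin.
have TA := gt_tour HA; have TB := gt_tour HB.
have dA : forall i, A i i = 0 by case: TA.
have dB : forall i, B i i = 0 by case: TB.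
have G : good A B.
  split => //.
  - move=> u v uv; have := H4 [set u; v]; rewrite cards2 uv => /(_ isT).
    by rewrite !pm2 // => /(congr1 (fun x => - x)); rewrite !opprK.
  - move=> a b d ab ad bd.
    have hc4 : (#|[set a; b; d]| <= 4)%N.
      by rewrite -setUA cardsU1 cards2; case: (_ \notin _); case: (b != d).
    by have := H4 _ hc4; rewrite !pm3.
case/set0Pn: X0 => x0 x0X.
case/set0Pn: CX0 => y0; rewrite inE => y0X.
set c := A x0 y0.
pose r0 := fun u : 'I_n => nat_of_bool (u \notin X).
have ChA : chain A c r0.
  move=> u v; rewrite /r0; case: (boolP (u \notin X)); case: (boolP (v \notin X)) => //= hv hu _.
  have uX : u \in X by rewrite -[u \in X]negbK.
  rewrite (cX u x0 v uX x0X hv).1.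
  have := cCX v y0 x0; rewrite !inE hv y0X x0X => /(_ isT isT isT) [_ ->] //.
have ne : r0 x0 <> r0 y0 by rewrite /r0 x0X y0X.
case: (eqVneq c (1 - c)) => [hc | hc].
- have ChB : chain B c r0.
    move=> u v h; have ruv : r0 u <> r0 v by move=> e; move: h; rewrite e ltnn.
    by case: (F0 G ChA ruv) => ->.
  case: (final TA TB ChA ChB (fun u v => conj id id) ne) => // ri.
  have l0 : (0 < n)%N by lia. have l1 : (1 < n)%N by lia. have l2 : (2 < n)%N by lia.
  pose i0 := Ordinal l0; pose i1 := Ordinal l1; pose i2 := Ordinal l2.
  have : r0 i0 = r0 i1 \/ r0 i0 = r0 i2 \/ r0 i1 = r0 i2.
    by rewrite /r0; case: (i0 \notin X); case: (i1 \notin X); case: (i2 \notin X); auto.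
  by case=> [/ri|[/ri|/ri]] /(congr1 val).
- case: (@ind R n c (n * n) A B r0 x0 y0 G ChA hc ne (leq_subr _ _)) => [//|[al h]].
  by exfalso; apply: nlin; exists al.
Qed.
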